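(* For $n\ge 2$ let $G_n$ be the intersection graph of the $\binom{n}{2}$ closed intervals $[i,j]$, $1\le i<j\le n$ (two intervals adjacent iff they intersect). If $G_n$ is the union of $t$ comparability subgraphs $H_1,\dots,H_t$ (i.e. $E(G_n)=\bigcup_{i=1}^t E(H_i)$), then $t\ge \frac12\log\log n$, where logarithms are base $2$.
   Context: A comparability graph is a graph admitting a transitive orientation (equivalently, the comparability graph of a partial order). *)

(* Defs.v *)
From mathcomp Require Import all_boot.
From Stdlib Require Import Reals.

Set Implicit Arguments.
Unset Strict Implicit.
Unset Printing Implicit Defensive.

(* Vertices of G_n: pairs (i, j) of points of {0, ..., n-1} with i < j,
   standing for the closed interval [i+1, j+1] (0-based shift of [1..n]). *)
Definition ivl (n : nat) := {p : 'I_n * 'I_n | p.1 < p.2}.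

Definition intersect n (u v : ivl n) : bool :=
  ((val u).1 <= (val v).2) && ((val v).1 <= (val u).2).

Definition Gn n : rel (ivl n) := fun u v => (u != v) && intersect u v.

Definition simple_graph (T : finType) (e : rel T) : Prop :=
  (forall x y, e x y = e y x) /\ (forall x, ~~ e x x).

Definition transitive_orientation (T : finType) (e : rel T) (o : rel T) : Prop :=
  [/\ (forall x y, o x y -> e x y),
      (forall x y, e x y -> o x y || o y x),
      (forall x y, ~~ (o x y && o y x)) &
      (forall x y z, o x y -> o y z -> o x z)].

Definition comparability_graph (T : finType) (e : rel T) : Prop :=
  simple_graph e /\ exists o, transitive_orientation e o.

Definition log2 (x : R) : R := (ln x / ln 2)%R.

(* Main.v *)
Require Import Defs.
From mathcomp Require Import all_boot.
From Stdlib Require Import Reals Lra.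
Lemma card_setC (C : finType) : #|{set C}| = expn 2 #|C|.
Proof.
rewrite -cardsT -card_powerset; apply: eq_card => A.
by rewrite powersetE subsetT inE.
Qed.

Lemma comb (C : finType) n (f : 'I_n -> 'I_n -> 'I_n -> option C) :
 (forall i j k : 'I_n, i < j -> j < k -> f i j k != None) ->
 (forall i j k l : 'I_n, i < j -> j < k -> k < l -> f i j k != f j k l) ->
 n <= expn 2 (expn 2 #|C|).
Proof.
move=> hnone hdiff.
pose S (i j : 'I_n) := [set c : C | [exists k : 'I_n, (j < k) && (f i j k == Some c)]].
pose T (i : 'I_n) := [set S i j | j in [pred j : 'I_n | i < j]].
have H : forall i j : 'I_n, i < j -> T i != T j.
  move=> i j hij; apply/negP => /eqP E.
  have : S i j \in T j by rewrite -E; apply/imsetP; exists j.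
  case/imsetP => k hjk ES; rewrite inE /= in hjk.
  case Ef: (f i j k) (hnone i j k hij hjk) => [c|] // _.
  have : c \in S i j by rewrite inE; apply/existsP; exists k; rewrite hjk Ef eqxx.
  rewrite ES inE => /existsP [l /andP [hkl /eqP Efl]].
  by move: (hdiff i j k l hij hjk hkl); rewrite Ef Efl eqxx.
have injT : injective T.
  move=> i j E; case: (ltngtP i j) => h.
  - by move: (H _ _ h); rewrite E eqxx.
  - by move: (H _ _ h); rewrite E eqxx.
  - exact: val_inj.
by have := leq_card T injT; rewrite card_ord !card_setC.
Qed.

Section RealFacts.
Local Open Scope R_scope.
Lemma ln_le' (x y : R) : (0 < x)%R -> (x <= y)%R -> (ln x <= ln y)%R.
Proof.
move=> hx [hxy|->]; last by apply: Rle_refl.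
by apply: Rlt_le; apply: ln_increasing.
Qed.

Lemma ln2_pos : (0 < ln 2)%R.
Proof. have := ln_lt_2; lra. Qed.

Lemma log2_le (x y : R) : (0 < x)%R -> (x <= y)%R -> (log2 x <= log2 y)%R.
Proof.
move=> hx hxy; rewrite /log2 /Rdiv; apply: Rmult_le_compat_r.
  by apply: Rlt_le; apply: Rinv_0_lt_compat; apply: ln2_pos.
exact: ln_le'.
Qed.

Lemma log2_pow2 (k : nat) : log2 (2 ^ k) = INR k.
Proof.
rewrite /log2 ln_pow; last lra.
have := ln2_pos; move=> h; field; lra.
Qed.

Lemma INR_expn2 N : INR (expn 2 N) = (2 ^ N)%R.
Proof.
elim: N => [|N IH]; first by rewrite expn0.
by rewrite expnS mult_INR IH /=; ring.
Qed.

Lemma log2_INR_le (n N : nat) : (0 < n)%nat -> (n <= expn 2 N)%nat -> (log2 (INR n) <= INR N)%R.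
Proof.
move=> hn hle; rewrite -[X in (_ <= X)%R]log2_pow2; apply: log2_le.
  by apply: lt_0_INR; apply/ltP.
rewrite -INR_expn2.
by apply: le_INR; apply/leP.
Qed.

End RealFacts.

Theorem theorem7 (n t : nat) (H : 'I_t -> rel (ivl n)) :
  2 <= n ->
  (forall i, comparability_graph (H i)) ->
  (forall i u v, H i u v -> Gn u v) ->
  (forall u v, Gn u v -> exists i, H i u v) ->
  (/ 2 * log2 (log2 (INR n)) <= INR t)%R.
Proof.
move=> hn hcomp hsub hcov.
have [O HO] : exists O : 'I_t -> rel (ivl n),
    forall c, transitive_orientation (H c) (O c).
  by apply: (@fin_all_exists _ (fun _ => rel (ivl n)) (fun c o => transitive_orientation (H c) o)) => c; case: (hcomp c) => _ [o ho]; exists o.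
pose P (i j k : 'I_n) (c : 'I_t * bool) :=
  [exists u : ivl n, exists v : ivl n,
     [&& val u == (i, j), val v == (j, k), H c.1 u v & O c.1 u v == c.2]].
pose f i j k := [pick c | P i j k c].
have hnone : forall i j k : 'I_n, i < j -> j < k -> f i j k != None.
  move=> i j k hij hjk; rewrite /f; case: pickP => // Hn.
  pose u : ivl n := exist _ (i, j) hij.
  pose v : ivl n := exist _ (j, k) hjk.
  have : Gn u v.
    rewrite /Gn /intersect /=; apply/andP; split.
      apply/eqP => E; have := f_equal (fun w : ivl n => (val w).1) E => /= Eij.
      by move: (hij); rewrite Eij ltnn.
    by rewrite (ltnW (ltn_trans hij hjk)) leqnn.
  case/hcov => c Hc; have := Hn (c, O c u v) => /= <-; rewrite /P.
  by apply/existsP; exists u; apply/existsP; exists v; rewrite /= !eqxx Hc.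
have Pof : forall i j k c, f i j k = Some c -> P i j k c.
  by move=> i j k c; rewrite /f; case: pickP => // x Px [<-].
have hdiff : forall i j k l : 'I_n, i < j -> j < k -> k < l -> f i j k != f j k l.
  move=> i j k l hij hjk hkl; apply/negP => /eqP E.
  case E1: (f i j k) (hnone i j k hij hjk) => [[c b]|] // _.
  have E2 : f j k l = Some (c, b) by rewrite -E.
  case/existsP: (Pof _ _ _ _ E1) => u /existsP [v /and4P [/eqP Hu /eqP Hv Huv /eqP Ouv]].
  case/existsP: (Pof _ _ _ _ E2) => v' /existsP [w /and4P [/eqP Hv' /eqP Hw Hvw /eqP Ovw]].
  have Evv : v' = v by apply: val_inj; rewrite Hv Hv'.
  subst v'; simpl in *.
  case: (HO c) => Oe Otot Oas Otr.
  have nuw : ~~ Gn u w by rewrite /Gn /intersect /= Hu Hw /= (leqNgt k j) hjk /= ?andbF ?andFb.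
  have nwu : ~~ Gn w u by rewrite /Gn /intersect /= Hu Hw /= (leqNgt k j) hjk /= ?andbF ?andFb.
  clear E1 E2 E; case: b Ouv Ovw => Ouv Ovw.
  - by move: nuw; rewrite (hsub _ _ _ (Oe _ _ (Otr _ _ _ Ouv Ovw))).
  - have Ovu : O c v u by move: (Otot _ _ Huv); rewrite Ouv.
    have Owv : O c w v by move: (Otot _ _ Hvw); rewrite Ovw.
    by move: nwu; rewrite (hsub _ _ _ (Oe _ _ (Otr _ _ _ Owv Ovu))).
have := @comb _ _ f hnone hdiff.
rewrite card_prod card_ord card_bool => hle.
have h1 := @log2_INR_le _ _ (ltnW hn) hle.
have hpos : (0 < log2 (INR n))%R.
  rewrite /log2 /Rdiv; apply: Rmult_lt_0_compat; last first.
    by apply: Rinv_0_lt_compat; apply: ln2_pos.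
  rewrite -ln_1; apply: ln_increasing; first lra.
  have : (INR 2 <= INR n)%R by apply: le_INR; apply/leP.
  rewrite /= ; lra.
have h2 := @log2_le _ _ hpos h1.
rewrite INR_expn2 log2_pow2 mult_INR /= in h2.
lra.
Qed.
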